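(* Every finite simple graph admits a rooted tree decomposition.
   Context: A tree decomposition of a graph $G$ is a pair $(T,\mathcal{V})$ with $T$ a tree and $\mathcal{V}=\{V_t\subseteq V(G): t\in V(T)\}$ such that (T1) $\bigcup_t V_t=V(G)$; (T2) every edge $uv$ of $G$ has both ends in some $V_t$; (T3) for each vertex $v$, the nodes $t$ with $v\in V_t$ induce a connected subtree of $T$. Its width is $\max_t|V_t|-1$, and the treewidth of $G$ is the minimum width of a tree decomposition. If $G$ has treewidth $k$, a tree decomposition $(T,\mathcal{V})$ is full if $|V_t|=k+1$ for every node $t$ and $|V_t\cap V_{t'}|=k$ for every edge $tt'$ of $T$. For a rooted tree $(T,r)$ and a node $t\neq r$, $p(t)$ denotes the neighbour of $t$ on the path from $t$ to $r$ (its parent), and the successors of $t$ are the nodes whose parent is $t$. A triple $(\mathcal{V},T,r)$ is a rooted tree decomposition of $G$ if $(T,\mathcal{V})$ is a full tree decomposition of $G$, $r\in V(T)$, and $V_t\cap V_{p(t)}\neq V_t\cap V_{t'}$ for every node $t\neq r$ and every successor $t'$ of $t$. *)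

(* Defs.v *)
From mathcomp Require Import all_boot.
Set Implicit Arguments. Unset Strict Implicit. Unset Printing Implicit Defensive.

(* Graphs: a finite simple graph is a symmetric irreflexive relation on a finType. *)

Definition connected_graph (T : finType) (e : rel T) : Prop :=
  forall x y : T, connect e x y.

(* a cycle: distinct vertices x, x1, ..., xk (k >= 2), consecutive adjacent,
   and xk adjacent to x *)
Definition acyclic (T : finType) (e : rel T) : Prop :=
  forall (x : T) (p : seq T),
    2 <= size p -> uniq (x :: p) -> path e x p -> ~~ e (last x p) x.

Definition is_tree (T : finType) (e : rel T) : Prop :=
  [/\ symmetric e, irreflexive e, (exists t : T, True),
      connected_graph e & acyclic e].

Definition tree_decomposition (V T : finType) (E : rel V) (e : rel T)
  (B : T -> {set V}) : Prop :=
  [/\ is_tree e,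
      forall v : V, exists t : T, v \in B t,
      forall u v : V, E u v -> exists t : T, (u \in B t) && (v \in B t)
    & forall v : V, forall t1 t2 : T, v \in B t1 -> v \in B t2 ->
        connect [rel x y | [&& e x y, v \in B x & v \in B y]] t1 t2].

(* width + 1 = maximum bag size *)
Definition width1 (V T : finType) (B : T -> {set V}) : nat := \max_(t : T) #|B t|.

(* treewidth(G) + 1 = k1 : the minimum of width + 1 over all tree decompositions
   (we use k1 = k + 1 to stay in nat) *)
Definition treewidth1 (V : finType) (E : rel V) (k1 : nat) : Prop :=
  (exists (T : finType) (e : rel T) (B : T -> {set V}),
      tree_decomposition E e B /\ width1 B = k1)
  /\ (forall (T : finType) (e : rel T) (B : T -> {set V}),
      tree_decomposition E e B -> k1 <= width1 B).

Definition full_td (V T : finType) (E : rel V) (e : rel T) (B : T -> {set V}) : Prop :=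
  tree_decomposition E e B /\
  exists k1 : nat, [/\ treewidth1 E k1,
    (forall t : T, #|B t| = k1) &
    (forall t t' : T, e t t' -> #|B t :&: B t'|.+1 = k1)].

(* u = p(t): t <> r and u is the neighbour of t on the path from t to r,
   i.e. t, u, ..., r is a path of distinct vertices *)
Definition parent (T : finType) (e : rel T) (r t u : T) : Prop :=
  t != r /\ exists p : seq T, [/\ path e t (u :: p), uniq (t :: u :: p) & last u p = r].

Definition rooted_td (V T : finType) (E : rel V) (e : rel T) (B : T -> {set V}) (r : T)
  : Prop :=
  full_td E e B /\
  forall t u t' : T, t != r -> parent e r t u -> parent e r t' t ->
    B t :&: B u != B t :&: B t'.

(* Main.v *)
Require Import Defs.
From mathcomp Require Import all_boot.
From Stdlib Require Import Classical.
Set Implicit Arguments. Unset Strict Implicit. Unset Printing Implicit Defensive.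

Lemma interior (T : eqType) (r : rel T) x p z :
  uniq (x :: p) -> path r x p -> z \in p -> z != last x p ->
  exists a b, [/\ r a z, r z b, a != b, a != z & b != z] /\ a \in x :: p /\ b \in x :: p.
Proof.
move=> Hu Hp Hz; case/splitPr: Hz Hu Hp => p1 p2 Hu Hp.
case: p2 Hu Hp => [|b p2] Hu Hp.
  by rewrite last_cat /= eqxx.
move=> _.
rewrite cat_path /= in Hp; case/and3P: Hp => _ Ha /andP[Hb _].
exists (last x p1), b; split; last first.
  split; last by rewrite inE mem_cat !inE eqxx !orbT.
  have := mem_last x p1; rewrite !inE => /orP[->//|H]; by rewrite mem_cat H orbT.
have Hu' : uniq ((x :: p1) ++ z :: b :: p2) by [].
rewrite cat_uniq in Hu'; case/and3P: Hu' => _ /hasPn H3 Hzb.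
have Hz : z \notin x :: p1 by apply: H3; rewrite mem_head.
have Hb' : b \notin x :: p1 by apply: H3; rewrite !inE eqxx orbT.
have Hl : last x p1 \in x :: p1 by apply: mem_last.
move: Hzb; rewrite /= inE negb_or => /andP[/andP[Hzb _] _].
split => //.
- by apply/eqP => E; move: Hb'; rewrite -E Hl.
- by apply/eqP => E; move: Hz; rewrite -E Hl.
- by rewrite eq_sym.
Qed.

Lemma ex_max (P : nat -> Prop) N :
  (exists n, P n) -> (forall n, P n -> n <= N) -> exists m, P m /\ forall n, P n -> n <= m.
Proof.
elim: N => [|N IH] [n0 Pn0] HB.
  exists 0; split; first by have := HB _ Pn0; rewrite leqn0 => /eqP <-.
  by move=> n /HB.
case: (classic (P N.+1)) => HN.
  by exists N.+1; split.
apply: IH; first by exists n0.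
move=> n Pn; have := HB _ Pn; rewrite leq_eqVlt ltnS => /orP[/eqP E|//].
by move: Pn; rewrite E.
Qed.

Lemma ex_min (P : nat -> Prop) :
  (exists n, P n) -> exists m, P m /\ forall n, P n -> m <= n.
Proof.
case=> n0 Pn0.
suff: forall k, (exists n, n <= k /\ P n) -> exists m, P m /\ forall n, P n -> m <= n.
  by apply; exists n0.
elim=> [|k IH] [n [Hn Pn]].
  by exists n; split => // n' _; move: Hn; rewrite leqn0 => /eqP ->.
case: (classic (exists n, n <= k /\ P n)) => H; first exact: IH.
exists n; split => // n' Pn'; rewrite leqNgt; apply/negP => Hlt.
apply: H; exists n'; split => //; rewrite -ltnS; exact: leq_trans Hlt Hn.
Qed.

Lemma avoid_leaf (T : finType) (r r' : rel T) l m x y :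
  (forall z, r l z -> z = m) -> (forall z, r z l -> z = m) ->
  (forall a b, r a b -> a != l -> b != l -> r' a b) ->
  x != l -> y != l -> connect r x y -> connect r' x y.
Proof.
move=> Hl1 Hl2 Hrr Hx Hy /connectP[p Hp Ey]; move: Hy; rewrite Ey.
case: (shortenP Hp) => p' Hp' Hu _ {Hp} Hy.
have Hall : all (predC1 l) (x :: p').
  apply/allP => z Hz /=; apply/negP => /eqP Ez; subst z.
  move: Hz; rewrite inE eq_sym (negbTE Hx) /= => Hz.
  have Hy' : l != last x p' by rewrite eq_sym.
  have [a [b [[Ha Hb Hab _ _] _]]] := interior Hu Hp' Hz Hy'.
  by move: Hab; rewrite (Hl2 _ Ha) (Hl1 _ Hb) eqxx.
apply/connectP; exists p' => //.
apply: (sub_in_path (P := predC1 l) _ Hall Hp').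
by move=> a b Ha Hb Hr; apply: Hrr.
Qed.

Definition restr (T : finType) (e : rel T) (A : {set T}) : rel T :=
  [rel u v | e u v && (u \in A) && (v \in A)].

Lemma leaf_exists (T : finType) (e : rel T) (A : {set T}) a b :
  symmetric e -> irreflexive e -> acyclic e -> a \in A -> b \in A -> a != b ->
  (forall x y, x \in A -> y \in A -> connect (restr e A) x y) ->
  exists l m, [/\ l \in A, m \in A, e l m & forall y, y \in A -> e l y -> y = m].
Proof.
move=> Hsym Hirr Hacy Ha Hb Hab Hcon.
pose P n := exists x p, [/\ size p = n, uniq (x :: p), all (mem A) (x :: p) & path e x p].
have [n [[x [p [Hs Hu Hall Hp]]] Hmax]] : exists n, P n /\ forall n', P n' -> n' <= n.
  apply: (@ex_max P #|A|).
    by exists 0, a, [::]; rewrite /= Ha.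
  move=> n [x [p [<- Hu Hall _]]].
  rewrite cardE; apply: leq_trans (uniq_leq_size Hu _) => //.
  by move=> z Hz; rewrite mem_enum; apply: (allP Hall).
have HxA : x \in A by move: Hall => /= /andP[].
have Hin : forall y, y \in A -> e x y -> y \in p.
  move=> y HyA Hxy; apply/negPn/negP => Hyp.
  have : P n.+1.
    exists y, (x :: p); split => //=; first by rewrite Hs.
    - move: Hu => /= ->; rewrite andbT inE negb_or Hyp andbT.
      by apply/eqP => E; move: Hxy; rewrite E Hirr.
    - by move: Hall => /= ->; rewrite andbT.
    - by rewrite Hsym Hxy.
  by move/Hmax; rewrite ltnn.
have [c [HcA Hxc]] : exists c, c \in A /\ x != c.
  case: (eqVneq x a) => [E|]; last by exists a.
  by exists b; rewrite -E in Hab.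
have [y0 [Hy0A Hxy0]] : exists y, y \in A /\ e x y.
  case/connectP: (Hcon _ _ HxA HcA) => q Hq Ec.
  case: q Hq Ec => [|y q] /=; first by move=> _ E; rewrite E eqxx in Hxc.
  by case/andP => /andP[/andP[H1 _] H2] _ _; exists y.
case: p Hs Hu Hall Hp Hin => [|m0 p'] Hs Hu Hall Hp Hin.
  by have := Hin _ Hy0A Hxy0.
exists x, m0; split => //.
- by move: Hall => /= /and3P[].
- by move: Hp => /= /andP[].
move=> y HyA Hxy; have := Hin _ HyA Hxy; rewrite inE => /orP[/eqP//|Hyp'].
exfalso; case/splitPr: Hyp' Hu Hp => q1 q2 Hu Hp.
rewrite -cat_rcons in Hu Hp.
have Hu2 : uniq (x :: m0 :: rcons q1 y).
  by move: Hu; rewrite -cat_cons -cat_cons cat_uniq => /andP[].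
have Hp2 : path e x (m0 :: rcons q1 y).
  by move: Hp; rewrite -cat_cons cat_path => /andP[].
have := Hacy x (m0 :: rcons q1 y) _ Hu2 Hp2.
rewrite /= size_rcons /= last_rcons Hsym Hxy; by move=> H; have := H isT.
Qed.

Section Build.
Variable V : finType.
Variable k1 : nat.

Fixpoint bagsr (R : {set V}) (rs : seq (V * {set V})) : seq {set V} :=
  match rs with [::] => [:: R] | s :: rs' => rcons (bagsr R rs') (s.1 |: s.2) end.
Fixpoint sepsr (rs : seq (V * {set V})) : seq {set V} :=
  match rs with [::] => [:: set0] | s :: rs' => rcons (sepsr rs') s.2 end.
Fixpoint validr (R : {set V}) (rs : seq (V * {set V})) : Prop :=
  match rs with
  | [::] => #|R| = k1
  | s :: rs' => [/\ validr R rs', #|s.2|.+1 = k1,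
                 has (fun X : {set V} => s.2 \subset X) (bagsr R rs')
               & all (fun X : {set V} => s.1 \notin X) (bagsr R rs')]
  end.

Lemma bags_card R rs : validr R rs -> forall X, X \in bagsr R rs -> #|X| = k1.
Proof.
elim: rs => [|[v S] rs IH] /=; first by move=> HR X; rewrite inE => /eqP ->.
case=> Hv HS /hasP[Y HY HSY] /allP Hall X; rewrite mem_rcons inE => /orP[/eqP ->|].
  rewrite cardsU1 -HS; suff -> : v \notin S by [].
  by apply/negP => HvS; move: (Hall Y HY); rewrite (subsetP HSY _ HvS).
exact: IH.
Qed.

Lemma exists_between (A X : {set V}) s :
  A \subset X -> #|A| <= s -> s <= #|X| -> exists S : {set V}, [/\ A \subset S, S \subset X & #|S| = s].
Proof.
move=> HAX; move Hd : (s - #|A|) => d; elim: d A HAX Hd => [|d IH] A HAX Hd Hs HsX.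
  by exists A; split => //; apply/eqP; rewrite eqn_leq Hs -subn_eq0 Hd.
have HAs : #|A| < s by rewrite -subn_gt0 Hd.
have : ~~ (X \subset A).
  apply/negP => HXA; have := subset_leq_card HXA; rewrite leqNgt.
  by rewrite (leq_trans HAs HsX).
case/subsetPn => x HxX HxA.
have H1 : x |: A \subset X by rewrite subUset sub1set HxX HAX.
have H2 : s - #|x |: A| = d by rewrite cardsU1 HxA add1n subnS Hd.
have H3 : #|x |: A| <= s by rewrite cardsU1 HxA.
have [S [HS1 HS2 HS3]] := IH (x |: A) H1 H2 H3 HsX.
by exists S; split => //; apply: subset_trans HS1; apply: subsetUr.
Qed.
End Build.

Lemma build (T V : finType) (e : rel T) (B : T -> {set V}) k1 :
  symmetric e -> irreflexive e -> acyclic e -> (forall t, #|B t| <= k1) ->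
  forall n (A : {set T}) (W : {set V}), #|A| + #|W| <= n ->
  (exists a, a \in A) ->
  (forall x y, x \in A -> y \in A -> connect (restr e A) x y) ->
  (forall w, w \in W -> exists2 t, t \in A & w \in B t) ->
  (forall w t1 t2, w \in W -> t1 \in A -> t2 \in A -> w \in B t1 -> w \in B t2 ->
     connect (restr e [set t in A | w \in B t]) t1 t2) ->
  k1 <= #|W| ->
  exists R rs, [/\ validr k1 R rs, all (fun X : {set V} => X \subset W) (bagsr R rs)
    & forall t, t \in A -> exists2 X, X \in bagsr R rs & B t :&: W \subset X].
Proof.
move=> Hsym Hirr Hacy HB; elim=> [|n IH] A W Hn [a Ha] Hcon Hcov H3 Hk.
  by move: Hn; rewrite leqn0 addn_eq0 => /andP[]; rewrite cards_eq0 => /eqP E; rewrite E inE in Ha.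
move: Hk; rewrite leq_eqVlt => /orP[/eqP HkW|HkW].
  exists W, [::]; split => //=; first by rewrite subxx.
  by move=> t _; exists W; rewrite ?inE ?eqxx // subsetIr.
have [b Hb Hab] : exists2 b, b \in A & a != b.
  case: (pickP [pred b | (b \in A) && (a != b)]) => [b /andP[]|H0]; first by exists b.
  exfalso; suff : W \subset B a.
    by move/subset_leq_card => H; move: (leq_trans H (HB a)); rewrite leqNgt HkW.
  apply/subsetP => w Hw; case: (Hcov w Hw) => t Ht Hwt.
  by move: (H0 t); rewrite /= Ht /= => /negbFE/eqP ->.
have [l [m [HlA HmA Hlm Hleaf]]] := leaf_exists Hsym Hirr Hacy Ha Hb Hab Hcon.
case: (pickP [pred v | [&& v \in W, v \in B l & v \notin B m]]) => [v /and3P[HvW Hvl Hvm]|Hnone].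
-
  have Hpriv : forall t, t \in A -> v \in B t -> t = l.
    move=> t Ht Hvt; apply/eqP; rewrite eq_sym; apply/negP => /negP Hlt.
    case/connectP: (H3 v l t HvW HlA Ht Hvl Hvt) => q Hq Et.
    case: q Hq Et => [|y q] /=; first by move=> _ E; rewrite E eqxx in Hlt.
    case/andP => /andP[/andP[Hly _] Hy] _ _.
    move: Hy; rewrite inE => /andP[HyA Hvy].
    by move: Hvm; rewrite -(Hleaf y HyA Hly) Hvy.
  pose W' := W :\ v.
  have HW : #|W| = #|W'|.+1 by rewrite (cardsD1 v W) HvW.
  have [R [rs [Hval Hsub Hcont]]] : exists R rs, [/\ validr k1 R rs,
      all (fun X : {set V} => X \subset W') (bagsr R rs)
    & forall t, t \in A -> exists2 X, X \in bagsr R rs & B t :&: W' \subset X].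
    apply: IH => //.
    - by move: Hn; rewrite HW addnS.
    - by exists a.
    - by move=> w; rewrite in_setD1 => /andP[_ /Hcov].
    - by move=> w t1 t2; rewrite in_setD1 => /andP[_ Hw]; apply: H3.
    - by rewrite -ltnS -HW.
  have [X HX HlX] := Hcont l HlA.
  have HXk := bags_card Hval HX.
  have Hk1 : 0 < k1 by apply: leq_trans (HB l); rewrite card_gt0; apply/set0Pn; exists v.
  have Hc1 : #|B l :&: W'| <= k1.-1.
    have : #|B l :&: W'| < #|B l|.
      apply: proper_card; rewrite properE subsetIl /=; apply/subsetPn; exists v => //.
      by rewrite inE in_setD1 eqxx andbF.
    by move=> H; rewrite -ltnS prednK //; apply: leq_trans H (HB l).
  have Hc2 : k1.-1 <= #|X| by rewrite HXk leq_pred.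
  have [S [HS1 HS2 HS3]] := @exists_between V (B l :&: W') X k1.-1 HlX Hc1 Hc2.
  exists R, ((v, S) :: rs); split => /=.
  + split => //; first by rewrite HS3 prednK.
    * by apply/hasP; exists X.
    * apply/allP => Y HY; apply/negP => HvY.
      by move: (subsetP (allP Hsub Y HY) v HvY); rewrite in_setD1 eqxx.
  + rewrite all_rcons; apply/andP; split.
    * rewrite subUset sub1set HvW; apply: (subset_trans HS2).
      apply: subset_trans (allP Hsub X HX) _; exact: subsetDl.
    * apply/allP => Y HY; apply: subset_trans (allP Hsub Y HY) _; exact: subsetDl.
  + move=> t Ht; case: (eqVneq t l) => [->|Htl].
    * exists (v |: S); first by rewrite mem_rcons mem_head.
      apply/subsetP => z; rewrite inE => /andP[Hzl HzW].
      rewrite in_setU1; case: (eqVneq z v) => //= Hzv.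
      by apply: (subsetP HS1); rewrite inE Hzl in_setD1 Hzv HzW.
    * have [Y HY HtY] := Hcont t Ht.
      exists Y; first by rewrite mem_rcons inE HY orbT.
      apply: subset_trans HtY; apply/subsetP => z; rewrite !inE => /andP[Hzt ->].
      rewrite Hzt andbT; apply/eqP => Ez; subst z.
      by move: Htl; rewrite (Hpriv t Ht Hzt) eqxx.
- (* no private vertex: remove leaf *)
  have Hml : m != l by apply/eqP => E; move: Hlm; rewrite E Hirr.
  pose A' := A :\ l.
  have HA : #|A| = #|A'|.+1 by rewrite (cardsD1 l A) HlA.
  have Hleaf' : forall (P : {set T}) z, P \subset A -> restr e P l z -> z = m.
    by move=> P z HP /= /andP[/andP[Hz _] HzP]; apply: Hleaf => //; apply: (subsetP HP).
  have Hleaf2 : forall (P : {set T}) z, P \subset A -> restr e P z l -> z = m.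
    by move=> P z HP /= /andP[/andP[Hz HzP] _]; apply: Hleaf; [apply: (subsetP HP)|rewrite Hsym].
  have [R [rs [Hval Hsub Hcont]]] : exists R rs, [/\ validr k1 R rs,
      all (fun X : {set V} => X \subset W) (bagsr R rs)
    & forall t, t \in A' -> exists2 X, X \in bagsr R rs & B t :&: W \subset X].
    apply: IH => //.
    - by move: Hn; rewrite HA addSn.
    - by exists m; rewrite in_setD1 Hml.
    - move=> x y; rewrite !in_setD1 => /andP[Hxl Hx] /andP[Hyl Hy].
      apply: (avoid_leaf (fun z => Hleaf' A z (subxx _)) (fun z => Hleaf2 A z (subxx _))) => //; last exact: Hcon.
      by move=> c d /= /andP[/andP[Hcd Hc] Hd] Hcl Hdl; rewrite /restr /A' /= !in_setD1 Hcd Hc Hd Hcl Hdl.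
    - move=> w Hw; case: (Hcov w Hw) => t Ht Hwt.
      case: (eqVneq t l) => [Etl|Htl]; last by exists t; rewrite // in_setD1 Htl.
      exists m; first by rewrite in_setD1 Hml.
      move: (Hnone w); rewrite /= Hw -Etl Hwt /= => /negbFE //.
    - move=> w t1 t2 Hw; rewrite /A' !in_setD1 => /andP[Ht1l Ht1] /andP[Ht2l Ht2] Hw1 Hw2.
      have HP : [set t in A | w \in B t] \subset A by apply/subsetP => z; rewrite inE => /andP[].
      apply: (avoid_leaf (fun z => Hleaf' _ z HP) (fun z => Hleaf2 _ z HP)) => //; last exact: H3.
      move=> c d /= /andP[/andP[Hcd Hc] Hd] Hcl Hdl.
      by move: Hc Hd; rewrite /restr /A' /= !inE Hcd Hcl Hdl /= => -> /andP[-> ->].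
    - exact: ltnW.
  exists R, rs; split => // t Ht; case: (eqVneq t l) => [->|Htl].
  + have HmA' : m \in A' by rewrite in_setD1 Hml.
    have [X HX HmX] := Hcont m HmA'.
    exists X => //; apply: subset_trans HmX; apply/subsetP => z; rewrite !inE => /andP[Hzl HzW].
    by move: (Hnone z); rewrite /= HzW Hzl /= => /negbFE ->.
  + by apply: Hcont; rewrite in_setD1 Htl.
Qed.

Section ParTree.
Variable N : nat.
Variable par : nat -> nat.
Hypothesis Hpar : forall i, 0 < i -> par i < i.

Definition ed : rel 'I_N.+1 :=
  fun i j => ((0 < i) && (par i == j)) || ((0 < j) && (par j == i)).

Lemma ed_sym : symmetric ed.
Proof. by move=> i j; rewrite /ed orbC. Qed.

Lemma ed_lt (a m : 'I_N.+1) : ed a m -> a < m -> par m = a.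
Proof.
rewrite /ed => /orP[/andP[Ha /eqP Hm] Hlt|/andP[_ /eqP //]].
by have := Hpar Ha; rewrite Hm ltnNge ltnW.
Qed.

Lemma ed_irr : irreflexive ed.
Proof.
move=> i; rewrite /ed orbb; apply/negP => /andP[Hi /eqP E].
by have := Hpar Hi; rewrite E ltnn.
Qed.

Lemma seq_max (s : seq 'I_N.+1) x : exists2 m, m \in x :: s & forall y, y \in x :: s -> y <= m.
Proof.
elim: s x => [|z s IH] x; first by exists x; rewrite ?mem_head // => y; rewrite inE => /eqP ->.
have [m Hm Hmax] := IH z.
case: (leqP x m) => Hxm.
  exists m; first by rewrite inE Hm orbT.
  by move=> y; rewrite inE => /orP[/eqP ->//|]; apply: Hmax.
exists x; first by rewrite mem_head.
move=> y; rewrite inE => /orP[/eqP ->//|/Hmax Hy]; exact: ltnW (leq_ltn_trans Hy Hxm).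
Qed.

Lemma max_interior x p (m : 'I_N.+1) : uniq (x :: p) -> path ed x p -> m \in p ->
  m != last x p -> (forall y, y \in x :: p -> y <= m) -> False.
Proof.
move=> Hu Hp Hm Hl Hmax.
have [a [b [[Ha Hb Hab Ham Hbm] [HaI HbI]]]] := interior Hu Hp Hm Hl.
have Hal : a < m by rewrite ltn_neqAle Hmax // andbT; apply: contra Ham => /eqP /val_inj ->.
have Hbl : b < m by rewrite ltn_neqAle Hmax // andbT; apply: contra Hbm => /eqP /val_inj ->.
have E1 := ed_lt Ha Hal.
have E2 := ed_lt (etrans (ed_sym _ _) Hb) Hbl.
have Eab : a = b by apply: val_inj; rewrite /= -E1 -E2.
by move: Hab; rewrite Eab eqxx.
Qed.

Lemma ed_acyclic : acyclic ed.
Proof.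
move=> x p Hs Hu Hp; apply/negP => Hc.
have Hcyc : cycle ed (x :: p) by rewrite /= rcons_path Hp Hc.
have [m Hm Hmax] := seq_max p x.
pose c := x :: p.
have Hrot : rot (index m c) c = m :: (drop (index m c).+1 c ++ take (index m c) c).
  by rewrite /rot (drop_nth m) ?index_mem // nth_index.
move: Hrot; set d := (drop _ _ ++ _) => Hrot.
have Hcd : cycle ed (m :: d) by rewrite -Hrot rot_cycle.
have Hud : uniq (m :: d) by rewrite -Hrot rot_uniq.
have Hsd : size (m :: d) = size c by rewrite -Hrot size_rot.
have Hmem : forall y, y \in m :: d -> y \in c by move=> y; rewrite -Hrot mem_rot.
case/lastP: d Hrot Hcd Hud Hsd Hmem => [|q l] Hrot Hcd Hud Hsd Hmem.
  by move: Hsd Hs => /= [<-].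
have Hq : 0 < size q by move: Hsd Hs => /= [<-]; rewrite size_rcons.
move: Hcd; rewrite /= rcons_path rcons_path last_rcons => /andP[/andP[Hpq Hlm0] Hlm].
apply: (@max_interior l (m :: q) m).
- by move: Hud; rewrite -rcons_cons rcons_uniq.
- by rewrite /= Hlm.
- exact: mem_head.
- case: q Hq Hud {Hpq Hlm0 Hrot Hsd Hmem} => [//|q0 q] _ /= Hud.
  apply/eqP => E; move: Hud; rewrite E => /andP[H _]; move: H.
  rewrite !inE mem_rcons inE; have := mem_last q0 q; rewrite inE => /orP[->|->] /=; by rewrite ?orbT.
- move=> y Hy; apply: Hmax; apply: Hmem.
  move: Hy; rewrite !inE mem_rcons inE => /orP[->|/orP[->|->]]; by rewrite ?orbT.
Qed.

Lemma ed_connect0 (x : 'I_N.+1) : connect ed x ord0.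
Proof.
move: x; suff H : forall n (x : 'I_N.+1), x <= n -> connect ed x ord0.
  by move=> x; apply: (H x).
elim=> [|n IH] x Hx.
  by apply: eq_connect0; apply: val_inj; move: Hx; rewrite leqn0 => /eqP.
case: (posnP x) => Hx0.
  by apply: eq_connect0; apply: val_inj.
have Hp : par x < N.+1 by apply: leq_trans (Hpar Hx0) (ltnW (ltn_ord x)).
apply: (@connect_trans _ ed (Ordinal Hp)).
  by apply: connect1; rewrite /ed Hx0 eqxx.
by apply: IH; rewrite -ltnS; apply: leq_trans (Hpar Hx0) Hx.
Qed.

Lemma ed_tree : is_tree ed.
Proof.
split.
- exact: ed_sym.
- exact: ed_irr.
- by exists ord0.
- move=> x y; apply: connect_trans (ed_connect0 x) _.
  by rewrite (sym_connect_sym ed_sym); apply: ed_connect0.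
- exact: ed_acyclic.
Qed.

Lemma ed_parent (t u : 'I_N.+1) : parent ed ord0 t u -> par t = u.
Proof.
case=> Ht0 [p [Hp Hu Hl]].
have Ht : 0 < t by rewrite lt0n; apply: contra Ht0 => /eqP Ht; apply/eqP/val_inj.
move: Hp => /= /andP[Htu Hp].
case: (eqVneq (par t) u) => // Hne; exfalso.
have [Hu0 Hput] : 0 < u /\ par u = t.
  by move: Htu; rewrite /ed Ht /= (negbTE Hne) /= => /andP[-> /eqP].
have Htlu : t < u by rewrite -Hput; apply: Hpar.
have [m Hm Hmax] := seq_max (u :: p) t.
apply: (@max_interior t (u :: p) m) => //=; first by rewrite Htu.
- move: Hm; rewrite inE => /orP[/eqP Emt|//].
  by have := Hmax u; rewrite !inE eqxx orbT Emt => /(_ isT); rewrite leqNgt Htlu.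
- rewrite Hl; apply/eqP => Em0.
  have := Hmax u; rewrite !inE eqxx orbT Em0 => /(_ isT); rewrite leqn0 => /eqP E.
  by move: Hu0; rewrite E.
Qed.
End ParTree.

Section Final.
Variable V : finType.
Variable k1 : nat.

Lemma size_bags (R : {set V}) rs : size (bagsr R rs) = (size rs).+1.
Proof. by elim: rs => //= s rs IH; rewrite size_rcons IH. Qed.
Lemma size_seps (rs : seq (V * {set V})) : size (sepsr rs) = (size rs).+1.
Proof. by elim: rs => //= s rs IH; rewrite size_rcons IH. Qed.
Lemma nth_bags0 (R : {set V}) rs : nth set0 (bagsr R rs) 0 = R.
Proof. by elim: rs => //= s rs IH; rewrite nth_rcons size_bags IH. Qed.

Lemma index_lemma R rs : validr k1 R rs -> forall i, 0 < i -> i < (size rs).+1 ->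
  exists v, [/\ nth set0 (bagsr R rs) i = v |: nth set0 (sepsr rs) i,
     #|nth set0 (sepsr rs) i|.+1 = k1,
     has (fun X : {set V} => nth set0 (sepsr rs) i \subset X) (take i (bagsr R rs))
   & all (fun X : {set V} => v \notin X) (take i (bagsr R rs))].
Proof.
elim: rs => [|[v S] rs IH] /= Hval i Hi Hs; first by move: Hi Hs; case: i.
case: Hval => Hval HS Hhas Hall.
rewrite !nth_rcons size_bags size_seps -!cats1.
move: Hs; rewrite ltnS leq_eqVlt => /orP[/eqP ->|Hlt].
  rewrite !ltnn !eqxx take_size_cat ?size_bags //.
  by exists v.
have Hle : i <= size (bagsr R rs) by rewrite size_bags ltnW.
rewrite (takel_cat _ Hle) Hlt.
exact: IH.
Qed.
End Final.

Section Final2.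
Variable V : finType.
Variable E : rel V.
Variable k1 : nat.
Variable R : {set V}.
Variable rs : seq (V * {set V}).
Hypothesis Hval : validr k1 R rs.

Let bags := bagsr R rs.
Let seps := sepsr rs.
Let N := size rs.
Definition parf (i : nat) := find (fun X : {set V} => nth set0 seps i \subset X) bags.

Lemma find_le (T : Type) (a : pred T) s x0 i : i < size s -> a (nth x0 s i) -> find a s <= i.
Proof.
move=> Hi Ha; rewrite leqNgt; apply/negP => Hlt.
by move: (before_find x0 Hlt); rewrite Ha.
Qed.

Lemma par_facts i : 0 < i -> i < N.+1 ->
  [/\ parf i < i, nth set0 seps i \subset nth set0 bags (parf i),
      forall j, j < parf i -> ~~ (nth set0 seps i \subset nth set0 bags j)
    & exists v, [/\ nth set0 bags i = v |: nth set0 seps i, #|nth set0 seps i|.+1 = k1,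
                    forall j, j < i -> v \notin nth set0 bags j & v \notin nth set0 seps i]].
Proof.
move=> Hi HiN.
have [v [Hb Hs Hhas Hall]] := index_lemma Hval Hi HiN.
have Hsz : i <= size bags by rewrite /bags size_bags; exact: ltnW.
have Hlt : parf i < i.
  rewrite /parf -(cat_take_drop i bags) find_cat Hhas.
  by move: Hhas; rewrite has_find size_takel.
have Hsub : nth set0 seps i \subset nth set0 bags (parf i).
  apply: (nth_find set0 (a := fun X : {set V} => nth set0 seps i \subset X)).
  by rewrite -(cat_take_drop i bags) has_cat Hhas.
have Hnth : forall j, j < i -> nth set0 bags j = nth set0 (take i bags) j.
  by move=> j Hj; rewrite nth_take.
split => //.
- by move=> j Hj; rewrite /parf in Hj; move: (before_find set0 Hj) => ->.
- exists v; split => //.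
  + move=> j Hj; have := all_nthP set0 Hall; rewrite Hnth // => ->; first by [].
    by rewrite size_takel.
  + apply/negP => Hv.
    have H := all_nthP set0 Hall.
    have Hp : parf i < size (take i bags) by rewrite size_takel.
    move: (H _ Hp); rewrite nth_take //.
    by rewrite (subsetP Hsub _ Hv).
Qed.

Lemma Hpar : forall i, 0 < i -> parf i < i.
Proof.
move=> i Hi; case: (ltnP i N.+1) => HiN; first by case: (par_facts Hi HiN).
have Hs : nth set0 seps i = set0 by rewrite nth_default // /seps size_seps.
have : parf i <= 0.
  rewrite /parf; apply: (find_le (x0 := set0)); first by rewrite /bags size_bags.
  by rewrite Hs sub0set.
by rewrite leqn0 => /eqP ->.
Qed.

Lemma inter_eq i : 0 < i -> i < N.+1 ->
  nth set0 bags i :&: nth set0 bags (parf i) = nth set0 seps i.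
Proof.
move=> Hi HiN; have [Hlt Hsub _ [v [Hb _ Hnot _]]] := par_facts Hi HiN.
have Hvp := Hnot _ Hlt.
rewrite Hb; apply/setP => z; rewrite !inE.
case: (eqVneq z v) => [->|Hzv] /=.
  rewrite (negbTE Hvp); apply/esym/negbTE/negP => H.
  by move: Hvp; rewrite (subsetP Hsub _ H).
by apply/andP/idP => [[]//|H]; split => //; apply: (subsetP Hsub).
Qed.

Hypothesis Htw : treewidth1 E k1.
Hypothesis Hcov : forall v, exists2 X, X \in bagsr R rs & v \in X.
Hypothesis Hedge : forall u v, E u v -> exists2 X, X \in bagsr R rs & (u \in X) && (v \in X).

Theorem final_rooted : exists (T : finType) (e : rel T) (B : T -> {set V}) (r : T), rooted_td E e B r.
Proof.
pose Bg := fun i : 'I_N.+1 => nth set0 bags i.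
have Hidx : forall X, X \in bags -> exists t : 'I_N.+1, Bg t = X.
  move=> X HX; have Hi : index X bags < N.+1 by rewrite -(size_bags R rs) index_mem.
  by exists (Ordinal Hi); rewrite /Bg /= nth_index.
exists ('I_N.+1 : finType), (ed parf), Bg, ord0.
have Hcard : forall t, #|Bg t| = k1.
  by move=> t; apply: (bags_card Hval); apply: mem_nth; rewrite /bags size_bags.
have HT3 : forall v (t1 t2 : 'I_N.+1), v \in Bg t1 -> v \in Bg t2 ->
    connect [rel x y | [&& ed parf x y, v \in Bg x & v \in Bg y]] t1 t2.
  move=> v t1 t2 H1 H2.
  set rl := [rel x y | _].
  have Hsym : symmetric rl by move=> x y; rewrite /rl /= ed_sym; case: (v \in Bg x); case: (v \in Bg y); rewrite ?andbF.
  have Hf : find (fun X : {set V} => v \in X) bags < N.+1.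
    rewrite -(size_bags R rs) -has_find; apply/hasP; exists (Bg t1) => //.
    by apply: mem_nth; rewrite /bags size_bags.
  pose t0 := Ordinal Hf.
  suff Hc : forall n (t : 'I_N.+1), t <= n -> v \in Bg t -> connect rl t t0.
    apply: connect_trans (Hc _ _ (leqnn _) H1) _.
    by rewrite (sym_connect_sym Hsym); apply: Hc (leqnn _) H2.
  elim=> [|n IH] t Ht Hvt.
  - have Hle : find (fun X : {set V} => v \in X) bags <= t.
      by apply: (find_le (x0 := set0)) => //; rewrite /bags size_bags.
    by apply: eq_connect0; apply: val_inj => /=; apply/eqP; rewrite eqn_leq Hle; move: Ht; rewrite leqn0 => /eqP ->.
  - have Hle : find (fun X : {set V} => v \in X) bags <= t.
      by apply: (find_le (x0 := set0)) => //; rewrite /bags size_bags.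
    case: (eqVneq (t : nat) (find (fun X : {set V} => v \in X) bags)) => [Et|Hne].
      by apply: eq_connect0; apply: val_inj.
    have Hlt : find (fun X : {set V} => v \in X) bags < t by rewrite ltn_neqAle eq_sym Hne.
    have Ht0 : 0 < t by apply: leq_ltn_trans Hlt.
    have [Hpt Hsub _ [w [Hb _ Hnot _]]] := par_facts Ht0 (ltn_ord t).
    have Hvw : v != w.
      apply/eqP => Ew; move: (Hnot _ Hlt); rewrite -Ew.
      by rewrite (nth_find set0 (a := fun X : {set V} => v \in X)) //; apply/hasP; exists (Bg t) => //; apply: mem_nth; rewrite /bags size_bags.
    have Hvs : v \in nth set0 seps t by move: Hvt; rewrite /Bg Hb in_setU1 (negbTE Hvw).
    have Hpn : parf t < N.+1 by apply: ltn_trans Hpt (ltn_ord t).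
    apply: (@connect_trans _ rl (Ordinal Hpn)).
      apply: connect1; rewrite /rl /= Hvt /ed /= Ht0 eqxx /=.
      exact: (subsetP Hsub).
    apply: IH => /=; first by rewrite -ltnS; apply: leq_trans Hpt Ht.
    exact: (subsetP Hsub).
split; first split.
- split.
  + exact: ed_tree Hpar.
  + by move=> v; have [X HX HvX] := Hcov v; have [t Ht] := Hidx X HX; exists t; rewrite Ht.
  + by move=> u v Huv; have [X HX HvX] := Hedge Huv; have [t Ht] := Hidx X HX; exists t; rewrite Ht.
  + exact: HT3.
- exists k1; split => // t t'.
  rewrite /ed => /orP[/andP[Ht /eqP Ep]|/andP[Ht /eqP Ep]].
  + have [_ _ _ [w [_ Hs _ _]]] := par_facts Ht (ltn_ord t).
    by rewrite /Bg -Ep inter_eq.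
  + have [_ _ _ [w [_ Hs _ _]]] := par_facts Ht (ltn_ord t').
    by rewrite /Bg setIC -Ep inter_eq.
- move=> t u t' Ht Hpu Hpt.
  have Eu := ed_parent Hpar Hpu.
  have Et := ed_parent Hpar Hpt.
  have Ht0 : 0 < t by rewrite lt0n; apply: contra Ht => /eqP E0; apply/eqP/val_inj.
  have Ht'0 : 0 < t' by case: Hpt => H _; rewrite lt0n; apply: contra H => /eqP E0; apply/eqP/val_inj.
  rewrite /Bg -Eu inter_eq // setIC -Et inter_eq //.
  apply/eqP => Es.
  have [Hpt' Hsub' Hmin' _] := par_facts Ht'0 (ltn_ord t').
  have [Hpt1 Hsub1 _ _] := par_facts Ht0 (ltn_ord t).
  have Hlt1 : parf t < parf t' by rewrite Et.
  have := Hmin' (parf t) Hlt1; rewrite Et in Es; rewrite -Es Hsub1 //.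

Qed.
End Final2.
Unset Implicit Arguments.

Theorem proposition2p3 (V : finType) (E : rel V)
  (Esym : symmetric E) (Eirr : irreflexive E) :
  exists (T : finType) (e : rel T) (B : T -> {set V}) (r : T), rooted_td E e B r.
Proof.
pose P n := exists (T : finType) (e : rel T) (B : T -> {set V}),
  tree_decomposition E e B /\ width1 B = n.
have P0 : P #|V|.
  exists (unit : finType), (fun _ _ => false), (fun _ => [set: V]); split; last first.
    apply/eqP; rewrite eqn_leq; apply/andP; split.
      by apply/bigmax_leqP => t _; rewrite cardsT.
    by rewrite -cardsT; apply: (leq_bigmax (F := fun _ : unit => #|[set: V]|) tt).
  split.
  - split => //; by move=> [] []; exact: connect0.
  - by move=> v; exists tt; rewrite inE.
  - by move=> u v _; exists tt; rewrite !inE.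
  - by move=> v [] [] _ _; exact: connect0.
have [k1 [[T [e [B [Htd Hw]]]] Hmin]] := ex_min (ex_intro _ _ P0).
have Htw : treewidth1 E k1.
  split; first by exists T, e, B.
  by move=> T' e' B' Htd'; apply: Hmin; exists T', e', B'.
case: Htd => [[Hsym Hirr [t0 _] Hcon Hacy] HT1 HT2 HT3].
have HB : forall t, #|B t| <= k1 by move=> t; rewrite -Hw; apply: leq_bigmax.
have HkV : k1 <= #|[set: V]|.
  by rewrite -Hw cardsT; apply/bigmax_leqP => t _; apply: max_card.
have H1 : forall x y, x \in [set: T] -> y \in [set: T] -> connect (restr e [set: T]) x y.
  by move=> x y Hx Hy; rewrite (@eq_connect _ _ e) //; move=> a b; rewrite /restr /= !inE !andbT.
have H2 : forall w, w \in [set: V] -> exists2 t, t \in [set: T] & w \in B t.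
  by move=> w _; have [t Ht] := HT1 w; exists t; rewrite ?inE.
have H3 : forall w t1 t2, w \in [set: V] -> t1 \in [set: T] -> t2 \in [set: T] ->
    w \in B t1 -> w \in B t2 -> connect (restr e [set t in [set: T] | w \in B t]) t1 t2.
  move=> w t1 t2 _ _ _ Hw1 Hw2; rewrite (@eq_connect _ _ [rel x y | [&& e x y, w \in B x & w \in B y]]).
    exact: HT3.
  by move=> a b; rewrite /restr /= !inE; case: (e a b); case: (w \in B a).
have [R [rs [Hval _ Hcont]]] := @build T V e B k1 Hsym Hirr Hacy HB (#|[set: T]| + #|[set: V]|)
  [set: T] [set: V] (leqnn _) (ex_intro _ t0 (in_setT t0)) H1 H2 H3 HkV.
have Hcont' : forall t, exists2 X, X \in bagsr R rs & B t \subset X.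
  by move=> t; have [X HX HtX] := Hcont t (in_setT t); exists X; rewrite // -(setIT (B t)).
apply: (final_rooted Hval Htw).
- move=> v; have [t Ht] := HT1 v; have [X HX HtX] := Hcont' t.
  by exists X => //; apply: (subsetP HtX).
- move=> u v Huv; have [t /andP[Hu Hv]] := HT2 u v Huv; have [X HX HtX] := Hcont' t.
  by exists X => //; rewrite (subsetP HtX _ Hu) (subsetP HtX _ Hv).
Qed.
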